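(* Let $\Gamma$ be a tetravalent graph admitting a subgroup $G\le\mathrm{Aut}(\Gamma)$ acting regularly on the arcs of $\Gamma$. If $\Gamma$ is the underlying graph of a map $\mathcal M$ in class $2_{\{0,1\}}$ with $\mathrm{Aut}(\mathcal M)=G$, then all orbits of $G$-consistent cycles of $\Gamma$ are $G$-symmetric. Moreover, if $G=\mathrm{Aut}(\Gamma)$ and all orbits of $G$-consistent cycles of $\Gamma$ are $G$-symmetric, then for any two orbits of $G$-consistent cycles of $\Gamma$ there exists a map $\mathcal M$ in class $2_{\{0,1\}}$ with $\mathrm{Aut}(\mathcal M)=G$ and underlying graph $\Gamma$ whose face boundaries are exactly the members of these two orbits.
   Context: A map is a $2$-cell embedding of a connected simple graph (its underlying graph) in a closed surface; the components of the complement are the faces. All maps considered are polytopal: flags correspond bijectively to incident triples (vertex, edge, face). For a flag $\Phi$ and $i\in\{0,1,2\}$, $\Phi^i$ is the unique flag differing from $\Phi$ exactly in its vertex ($i=0$), edge ($i=1$) or face ($i=2$). $\mathrm{Aut}(\mathcal M)$ is the group of automorphisms of the underlying graph preserving the set of faces, acting on flags. A map is in class $2_{\{0,1\}}$ if $\mathrm{Aut}(\mathcal M)$ has exactly two orbits on flags and for every flag $\Phi$, the flags $\Phi^0,\Phi^1$ lie in the orbit of $\Phi$ while $\Phi^2$ does not. For an arc-transitive $G\le\mathrm{Aut}(\Gamma)$, a directed cycle $(v_0,\ldots,v_{r-1})$ is $G$-consistent if some $g\in G$ maps each $v_i$ to $v_{i+1}$ (indices mod $r$); an undirected cycle is $G$-consistent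 if both orientations are; it is $G$-symmetric if moreover some element of $G$ maps one orientation to the other. $G$ acts on the set of $G$-consistent cycles, giving orbits of $G$-consistent cycles. *)

(* Defs.v *)
From mathcomp Require Import all_boot all_fingroup.
Set Implicit Arguments. Unset Strict Implicit. Unset Printing Implicit Defensive.


Section Defs.
Variable V : finType.
Variable e : rel V.

Definition simple_graph := symmetric e /\ irreflexive e.
Definition graph_connected := forall x y : V, connect e x y.
Definition tetravalent := forall v : V, #|[set w | e v w]| = 4.

Definition graph_aut : {set {perm V}} :=
  [set g : {perm V} | [forall x, forall y, e (g x) (g y) == e x y]].

Definition arc_regular (G : {set {perm V}}) :=
  forall u v x y : V, e u v -> e x y ->
    #|[set g in G | (g u == x) && (g v == y)]| = 1.

Definition is_edge (E : {set V}) := exists u w, e u w /\ E = [set u; w].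

Definition dcycle (s : seq V) := [/\ uniq s, 3 <= size s & path.cycle e s].

Definition dconsistent (G : {set {perm V}}) (s : seq V) :=
  exists2 g, g \in G & map g s = rot 1 s.

Definition cycle_edges (s : seq V) : {set {set V}} :=
  [set [set x; next s x] | x in s].

Definition ucycle (C : {set {set V}}) := exists s, dcycle s /\ cycle_edges s = C.

Definition uconsistent (G : {set {perm V}}) (C : {set {set V}}) :=
  exists s, [/\ dcycle s, cycle_edges s = C, dconsistent G s & dconsistent G (rev s)].

Definition usymmetric (G : {set {perm V}}) (C : {set {set V}}) :=
  uconsistent G C /\
  exists s, [/\ dcycle s, cycle_edges s = C &
     exists2 g, g \in G & exists k, map g s = rot k (rev s)].

Definition act_cyc (g : {perm V}) (C : {set {set V}}) : {set {set V}} :=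
  [set g @: E | E : {set V} in C].

Definition cyc_orbit (G : {set {perm V}}) (C : {set {set V}}) : {set {set {set V}}} :=
  [set act_cyc g C | g in G].

Definition cc_orbit (G : {set {perm V}}) (O : {set {set {set V}}}) :=
  exists2 C, uconsistent G C & O = cyc_orbit G C.

Definition orbit_symmetric (G : {set {perm V}}) (O : {set {set {set V}}}) :=
  forall C, C \in O -> usymmetric G C.

(* A (polytopal) map with underlying graph Gamma, given by its set F of faces;
   each face boundary is a cycle of Gamma, each edge lies on exactly two faces,
   and the faces around each vertex form a single cycle (closed surface). *)
Definition is_map (F : {set {set {set V}}}) :=
  [/\ forall f, f \in F -> ucycle f,
      forall u w, e u w -> #|[set f in F | [set u; w] \in f]| = 2 &
      forall v x y, e v x -> e v y ->
        connect (fun a b => [&& e v a, e v b &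
                  [exists f in F, ([set v; a] \in f) && ([set v; b] \in f)]]) x y].

Definition map_aut (F : {set {set {set V}}}) : {set {perm V}} :=
  [set g in graph_aut | [set act_cyc g f | f in F] == F].

Definition flag_t := (V * {set V} * {set {set V}})%type.

Definition is_flag (F : {set {set {set V}}}) (P : flag_t) :=
  let: (v, E, f) := P in [/\ v \in E, is_edge E, E \in f & f \in F].

Definition act_flag (g : {perm V}) (P : flag_t) : flag_t :=
  let: (v, E, f) := P in (g v, g @: E, act_cyc g f).

Definition same_orbit (F : {set {set {set V}}}) (P Q : flag_t) :=
  exists2 g, g \in map_aut F & act_flag g P = Q.

Definition flag_adj (F : {set {set {set V}}}) (i : nat) (P Q : flag_t) :=
  is_flag F Q /\
  let: (v, E, f) := P in let: (v', E', f') := Q in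
  match i with
  | 0 => [/\ v' != v, E' = E & f' = f]
  | 1 => [/\ v' = v, E' != E & f' = f]
  | _ => [/\ v' = v, E' = E & f' != f]
  end.

Definition class2_01 (F : {set {set {set V}}}) :=
  (exists P1 P2, [/\ is_flag F P1, is_flag F P2, ~ same_orbit F P1 P2 &
      forall Q, is_flag F Q -> same_orbit F P1 Q \/ same_orbit F P2 Q]) /\
  (forall P, is_flag F P ->
     [/\ forall Q, flag_adj F 0 P Q -> same_orbit F P Q,
         forall Q, flag_adj F 1 P Q -> same_orbit F P Q &
         forall Q, flag_adj F 2 P Q -> ~ same_orbit F P Q]).

End Defs.

(* Main.v *)
Require Import Defs.
From mathcomp Require Import all_boot all_fingroup.
Set Implicit Arguments. Unset Strict Implicit. Unset Printing Implicit Defensive.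

Section Cyc.
Variable T : finType.
Implicit Types (s t w : seq T) (x y z a b c d : T).

Lemma imset_pair (f : T -> T) a b : f @: [set a; b] = [set f a; f b].
Proof. by rewrite imsetU1 imset_set1. Qed.

Lemma set2C a b : [set a; b] = [set b; a].
Proof. by apply/setP=> u; rewrite !inE orbC. Qed.

Lemma set2_eq a b c d : [set a; b] = [set c; d] -> (a = c /\ b = d) \/ (a = d /\ b = c).
Proof.
move=> E.
have Ha : a \in [set c; d] by rewrite -E set21.
have Hb : b \in [set c; d] by rewrite -E set22.
have Hc : c \in [set a; b] by rewrite E set21.
have Hd : d \in [set a; b] by rewrite E set22.
case/set2P: Ha => Ha; case/set2P: Hb => Hb; subst; auto.
- by case/set2P: Hd => ->; auto.
- by case/set2P: Hc => ->; auto.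
Qed.

Lemma cyc_ind s x0 (P : T -> Prop) : uniq s -> x0 \in s -> P x0 ->
  (forall y, y \in s -> P y -> P (next s y)) -> forall y, y \in s -> P y.
Proof.
move=> Us x0s P0 IH y ys.
have : fconnect (next s) x0 y by rewrite (fconnect_cycle (cycle_next Us) x0s).
move/iter_findex <-; elim: (findex _ _ _) => [|n IHn] //=.
apply: IH => //.
elim: n {IHn} => [|n IHn] //=; by rewrite mem_next.
Qed.

Lemma next_neq s x : uniq s -> 2 <= size s -> x \in s -> next s x != x.
Proof.
move=> Us Ss xs; case/rot_to: xs => i w Hw.
rewrite -(next_rot i Us) Hw.
have : uniq (x :: w) by rewrite -Hw rot_uniq.
have : 2 <= size (x :: w) by rewrite -Hw size_rot.
case: w {Hw} => [|y w] //= _.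
rewrite eqxx inE negb_or => /andP[/andP[xy _] _]; by rewrite eq_sym.
Qed.

Lemma next2_neq s x : uniq s -> 3 <= size s -> x \in s -> next s (next s x) != x.
Proof.
move=> Us Ss xs; case/rot_to: xs => i w Hw.
rewrite -!(next_rot i Us) Hw.
have : uniq (x :: w) by rewrite -Hw rot_uniq.
have : 3 <= size (x :: w) by rewrite -Hw size_rot.
case: w {Hw} => [|y [|z w]] //= _.
rewrite !inE !negb_or => /andP[/andP[xy /andP[xz _]] /andP[/andP[yz _] _]].
rewrite eqxx; case: ifP => [/eqP E|_]; first by rewrite E eqxx in xy.
case: ifP => [_|/negP[]//]; by rewrite eq_sym.
Qed.

Lemma next_prev_neq s x : uniq s -> 3 <= size s -> x \in s -> next s x != prev s x.
Proof.
move=> Us Ss xs; apply/eqP => E.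
have := next2_neq Us Ss xs; by rewrite E next_prev // eqxx.
Qed.

Lemma edgeP s x y : uniq s ->
  ([set x; y] \in cycle_edges s) <-> (x \in s /\ (y = next s x \/ y = prev s x)).
Proof.
move=> Us; split.
- case/imsetP => z zs /set2_eq [[-> ->]|[-> ->]]; first by auto.
  by rewrite mem_next prev_next //; auto.
- case=> xs [->|->]; first by apply/imsetP; exists x.
  apply/imsetP; exists (prev s x); first by rewrite mem_prev.
  by rewrite next_prev // set2C.
Qed.

Lemma mem_edges s x : uniq s -> x \in s -> [set x; next s x] \in cycle_edges s.
Proof. by move=> Us xs; apply/edgeP => //; auto. Qed.

Lemma edge_mem s x y : uniq s -> [set x; y] \in cycle_edges s -> x \in s.
Proof. by move=> Us /edgeP[]. Qed.

Lemma cycle_edges_rev s : uniq s -> cycle_edges (rev s) = cycle_edges s.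
Proof.
move=> Us; have Ur : uniq (rev s) by rewrite rev_uniq.
apply/setP => E; apply/imsetP/imsetP => [[x xs ->]|[x xs ->]].
- rewrite mem_rev in xs; rewrite next_rev //.
  have : [set x; prev s x] \in cycle_edges s by apply/edgeP => //; auto.
  by case/imsetP => z zs ->; exists z.
- have : [set x; next s x] \in cycle_edges (rev s).
    by apply/edgeP => //; rewrite mem_rev prev_rev //; auto.
  by case/imsetP => z zs ->; exists z.
Qed.

Lemma cycle_edges_rot k s : uniq s -> cycle_edges (rot k s) = cycle_edges s.
Proof.
move=> Us; apply/setP => E; apply/imsetP/imsetP => [[x xs ->]|[x xs ->]].
- by exists x; rewrite ?next_rot // -(mem_rot k).
- by exists x; rewrite ?next_rot // mem_rot.
Qed.

Lemma cycle_edges_map (h : {perm T}) s : uniq s ->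
  cycle_edges (map h s) = act_cyc h (cycle_edges s).
Proof.
move=> Us; apply/setP => E; apply/imsetP/imsetP => [[x]|[E' /imsetP[y ys ->] ->]].
- case/mapP => y ys -> ->; exists [set y; next s y]; first exact: imset_f.
  by rewrite imset_pair next_map //; apply: perm_inj.
- exists (h y); first by rewrite mem_map //; apply: perm_inj.
  by rewrite imset_pair next_map //; apply: perm_inj.
Qed.

Lemma fwd_of_rot (g : T -> T) s : uniq s -> map g s = rot 1 s ->
  forall x, x \in s -> g x = next s x.
Proof.
case: s => [|a w] // Us E x xs.
have Hi : index x (a :: w) < size (a :: w) by rewrite index_mem.
rewrite -(nth_index a xs) next_nth mem_nth // index_uniq //.
rewrite -(nth_map a (g a)) // E rot1_cons nth_rcons.
move: Hi; rewrite /= ltnS leq_eqVlt => /orP[/eqP ->|Hlt].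
  by rewrite ltnn eqxx nth_default.
by rewrite Hlt (set_nth_default a).
Qed.

Lemma traject_of (h : T -> T) x w : uniq (x :: w) ->
  (forall y, y \in x :: w -> h y = next (x :: w) y) ->
  x :: w = traject h x (size (x :: w)).
Proof.
move=> U H; apply: (@eq_from_nth _ x); first by rewrite size_traject.
move=> i Hi; rewrite nth_traject //.
elim: i Hi => [|i IH] Hi //=.
have Hi' : i < size (x :: w) by apply: ltnW.
rewrite -IH // H ?mem_nth // next_nth mem_nth // index_uniq //.
Qed.

Lemma rot_traject (h : T -> T) w x : uniq w ->
  (forall y, y \in w -> h y = next w y) -> x \in w ->
  rot (index x w) w = traject h x (size w).
Proof.
move=> Uw H xw; rewrite (rot_index xw) -(size_rot (index x w) w) (rot_index xw).
apply: traject_of; first by rewrite -(rot_index xw) rot_uniq.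
move=> y; rewrite -(rot_index xw) mem_rot next_rot //; exact: H.
Qed.

Lemma orient1 s t x0 : uniq s -> uniq t -> 3 <= size t ->
  cycle_edges s = cycle_edges t -> x0 \in s -> next t x0 = next s x0 ->
  forall x, x \in s -> next t x = next s x.
Proof.
move=> Us Ut St E x0s H0; apply: (cyc_ind Us x0s H0) => y ys Hy.
set z := next s y.
have zs : z \in s by rewrite mem_next.
have inT u : u \in s -> u \in t.
  by move=> us; apply: (@edge_mem t u (next s u)) => //; rewrite -E mem_edges.
have : [set z; next t z] \in cycle_edges s by rewrite E mem_edges // inT.
case/(edgeP _ _ Us) => _ [] // Hz.
have := next2_neq Ut St (inT _ ys).
by rewrite Hy -/z Hz /z prev_next // eqxx.
Qed.

Lemma orient s t : uniq s -> uniq t -> 3 <= size t ->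
  cycle_edges s = cycle_edges t ->
  (forall x, x \in s -> next t x = next s x) \/
  (forall x, x \in s -> next t x = prev s x).
Proof.
move=> Us Ut St E.
case Hs: s => [|x0 w]; first by left.
have x0s : x0 \in s by rewrite Hs mem_head.
rewrite -Hs.
have x0t : x0 \in t by apply: (@edge_mem t x0 (next s x0)) => //; rewrite -E mem_edges.
have : [set x0; next t x0] \in cycle_edges s by rewrite E mem_edges.
case/(edgeP _ _ Us) => _ [] H.
- by left; apply: (orient1 Us Ut St E x0s).
- right=> x xs.
  have Ur : uniq (rev s) by rewrite rev_uniq.
  rewrite -next_rev //; apply: (orient1 (x0 := x0) Ur Ut St).
  all: by rewrite ?cycle_edges_rev ?mem_rev ?next_rev.
Qed.

End Cyc.

Section ActCyc.
Variable V : finType.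
Implicit Types (C : {set {set V}}) (g h : {perm V}).

Lemma act_cyc_mul g h C : act_cyc (g * h)%g C = act_cyc h (act_cyc g C).
Proof.
rewrite /act_cyc -imset_comp; apply: eq_imset => E /=.
by rewrite -imset_comp; apply: eq_imset => x /=; rewrite permM.
Qed.

Lemma act_cyc1 C : act_cyc 1%g C = C.
Proof.
rewrite /act_cyc -[RHS]imset_id; apply: eq_imset => E.
by rewrite -[RHS]imset_id; apply: eq_imset => x; rewrite perm1.
Qed.

Lemma act_cycK g C : act_cyc g^-1%g (act_cyc g C) = C.
Proof. by rewrite -act_cyc_mul mulgV act_cyc1. Qed.

Lemma act_cycKV g C : act_cyc g (act_cyc g^-1%g C) = C.
Proof. by rewrite -act_cyc_mul mulVg act_cyc1. Qed.

Lemma act_edge g C a b : [set a; b] \in C -> [set g a; g b] \in act_cyc g C.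
Proof. by move=> H; rewrite -imset_pair; apply: imset_f. Qed.

Lemma act_edge_inv g C a b : [set g a; g b] \in act_cyc g C -> [set a; b] \in C.
Proof.
move=> H; have := act_edge g^-1%g H; by rewrite act_cycK !permK.
Qed.

End ActCyc.

Section Graph.
Variables (V : finType) (e : rel V) (G : {group {perm V}}).
Hypotheses (esym : symmetric e) (eirr : irreflexive e) (tetra : tetravalent e)
  (GA : G \subset graph_aut e) (AR : arc_regular e G).

Lemma aut_e g x y : g \in G -> e (g x) (g y) = e x y.
Proof.
move=> gG; have := subsetP GA g gG; rewrite inE => /forallP/(_ x)/forallP/(_ y).
by move/eqP.
Qed.

Lemma AR_uniq g1 g2 u v : g1 \in G -> g2 \in G -> e u v ->
  g1 u = g2 u -> g1 v = g2 v -> g1 = g2.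
Proof.
move=> g1G g2G euv H1 H2.
have : e (g1 u) (g1 v) by rewrite aut_e.
move=> /(AR euv) /eqP /cards1P [y Hy].
have : g1 \in [set y] by rewrite -Hy inE g1G !eqxx.
have : g2 \in [set y] by rewrite -Hy inE g2G -H1 -H2 !eqxx.
by rewrite !inE => /eqP -> /eqP ->.
Qed.

Lemma AR_ex u v x y : e u v -> e x y -> exists2 g, g \in G & g u = x /\ g v = y.
Proof.
move=> euv exy; have := AR euv exy => /eqP /cards1P [g Hg].
have : g \in [set g] by rewrite inE.
by rewrite -Hg inE => /andP[gG /andP[/eqP ? /eqP ?]]; exists g.
Qed.

Lemma ne_of_e x y : e x y -> x != y.
Proof. by apply: contraTneq => ->; rewrite eirr. Qed.

Lemma dcycle_map h s : h \in G -> dcycle e s -> dcycle e (map h s).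
Proof.
move=> hG [Us Ss Cs]; split.
- by rewrite map_inj_uniq //; apply: perm_inj.
- by rewrite size_map.
- by rewrite cycle_map (eq_cycle (e' := e)) // => x y /=; rewrite aut_e.
Qed.

Lemma dcons_map h s : h \in G -> dconsistent G s -> dconsistent G (map h s).
Proof.
move=> hG [g gG Hg]; exists (h^-1 * g * h)%g; first by rewrite !groupM ?groupV.
rewrite -map_comp -map_rot -Hg -map_comp; apply: eq_map => x /=.
by rewrite !permM permK.
Qed.

Lemma ucons_map h C : h \in G -> uconsistent e G C -> uconsistent e G (act_cyc h C).
Proof.
move=> hG [s [Ds Es D1 D2]]; have Us : uniq s by case: Ds.
exists (map h s); split.
- exact: dcycle_map.
- by rewrite cycle_edges_map // Es.
- exact: dcons_map.
- by rewrite -map_rev; apply: dcons_map.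
Qed.

Lemma five v a b c d x : e v a -> e v b -> e v c -> e v d -> e v x ->
  a != b -> a != c -> a != d -> b != c -> b != d -> c != d ->
  x != a -> x != b -> x != c -> x = d.
Proof.
move=> ea eb ec ed ex ab ac ad bc bd cd xa xb xc.
apply/eqP; apply: contraT => xd.
have : #|a |: (b |: (c |: (d |: [set x])))| <= #|[set w | e v w]|.
  apply: subset_leq_card; apply/subsetP => y; rewrite !inE.
  by move=> /orP[/eqP->|/orP[/eqP->|/orP[/eqP->|/orP[/eqP->|/eqP->]]]].
rewrite tetra !cardsU1 cards1 !inE.
by rewrite ![_ == x]eq_sym (negbTE ab) (negbTE ac) (negbTE ad) (negbTE bc) (negbTE bd)
  (negbTE cd) (negbTE xa) (negbTE xb) (negbTE xc) (negbTE xd).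
Qed.

Section Part1.
Variable F : {set {set {set V}}}.
Hypotheses (HF : is_map e F) (HC : class2_01 e F) (HA : map_aut e F = G).

Definition swap v a b := exists2 s : {perm V}, s \in G & [/\ s v = v, s a = b & s b = a].

Lemma FL v a b f : f \in F -> [set v; a] \in f -> [set v; b] \in f -> a != b ->
  e v a -> e v b -> swap v a b.
Proof.
move=> fF va vb ab eva evb.
case: HC => _ /(_ (v, [set v; a], f)) [].
  by split=> //; [rewrite set21 | exists v, a].
move=> _ /(_ (v, [set v; b], f)) + _.
case.
  split; first by split=> //; [rewrite set21 | exists v, b].
  split=> //; apply/eqP => /set2_eq [[_ E]|[E _]]; first by rewrite E eqxx in ab.
  by rewrite -E eirr in eva.
move=> g; rewrite HA => gG [gv ga gf].
have {}ga : g a = b.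
  move: ga; rewrite imset_pair gv => /set2_eq [[_ ->]|[E _]] //.
  by rewrite E eirr in evb.
have gb : [set v; g b] \in f by rewrite -gf -gv; apply: act_edge.
case: HF => /(_ f fF) [s [[Us Ss Cs] Es]] _ _.
rewrite -Es in va vb gb.
case/(edgeP _ _ Us): va => vs Ha.
case/(edgeP _ _ Us): vb => _ Hb.
case/(edgeP _ _ Us): gb => _ Hgb.
have gbb : g b != b by rewrite -{2}ga (inj_eq perm_inj) eq_sym.
exists g => //; split=> //.
move: ab gbb; case: Hgb => ->; case: Ha => ->; case: Hb => -> //; by rewrite eqxx.
Qed.

Lemma COMP v x z z' : e v x -> e v z -> e v z' -> x != z -> z != z' -> x != z' ->
  swap v x z -> swap v z z' -> swap v x z'.
Proof.
move=> ex ez ez' xz zz' xz' [s sG [sv sx sz]] [t tG [tv tz tz']].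
exists (s * t)%g; first by rewrite groupM.
set w := s z'.
have ew : e v w by rewrite /w -{1}sv aut_e.
have wx : w != x.
  by apply: contraNneq zz' => E; apply/eqP; apply: (@perm_inj _ s); rewrite sz -E.
have wz : w != z.
  by apply: contraNneq xz' => E; apply/eqP; apply: (@perm_inj _ s); rewrite sx -E.
have wz' : w != z'.
  apply: contraNneq xz => E; have s1 : s = 1%g.
    by apply: (AR_uniq (u := v) (v := z')) => //; rewrite ?perm1 // group1.
  by rewrite -sx s1 perm1.
have tw : t w != w.
  apply: contraNneq zz' => E; have t1 : t = 1%g.
    by apply: (AR_uniq (u := v) (v := w)) => //; rewrite ?perm1 // group1.
  by rewrite -tz t1 perm1.
have twz : t w != z by rewrite -tz' (inj_eq perm_inj).
have twz' : t w != z' by rewrite -tz (inj_eq perm_inj).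
have etw : e v (t w) by rewrite -{1}tv aut_e.
have zw : z != w by rewrite eq_sym.
have zx : z != x by rewrite eq_sym.
have z'w : z' != w by rewrite eq_sym.
have z'x : z' != x by rewrite eq_sym.
have := five ez ez' ew ex etw zz' zw zx z'w z'x wx twz twz' tw.
move=> twx; split; by rewrite !permM ?sv ?tv ?sx ?tz // -/w twx.
Qed.

Lemma SWAP v x y : e v x -> e v y -> x != y -> swap v x y.
Proof.
move=> ex ey xy.
case: HF => _ _ /(_ v x y ex ey) /connectP [p Hp Ey].
set R := (fun a b : V => _) in Hp.
have key : forall q z, (z = x \/ swap v x z) -> path R z q ->
    (last z q = x \/ swap v x (last z q)).
  elim=> [|z' q IH] z Hz //=; case/andP => Rzz' Hp'; apply: IH Hp'.
  case/and3P: Rzz' => ez ez' /existsP [f /and3P [fF fz fz']].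
  have [z'x|z'x] := eqVneq z' x; first by left.
  have [zz'|zz'] := eqVneq z z'; first by rewrite -zz'.
  have [zx|zx] := eqVneq z x.
    by right; apply: (FL fF) => //; rewrite -zx.
  case: Hz => [Hz|Hz]; first by rewrite Hz eqxx in zx.
  right; apply: (COMP ex ez ez') => //; first by rewrite eq_sym.
    by rewrite eq_sym.
  exact: (FL fF).
have := key p x (or_introl erefl) Hp; rewrite -Ey.
by case=> // E; rewrite E eqxx in xy.
Qed.

Lemma SYM C : uconsistent e G C -> usymmetric e G C.
Proof.
move=> HCc; split => //.
case: HCc => s [[Us Ss Cs] Es [g gG Hg] _].
exists s; split => //.
have Hfwd := fwd_of_rot Us Hg.
have [v0 [v1 [v2 [w Hs]]]] : exists v0 v1 v2 w, s = v0 :: v1 :: v2 :: w.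
  by case: s Ss {Us Cs Es Hg Hfwd} => [|a [|b [|c w]]] //; exists a, b, c, w.
have [g0 g1] : g v0 = v1 /\ g v1 = v2.
  by move: Hg; rewrite Hs rot1_cons /= => -[-> ->].
have [e01 e12] : e v0 v1 /\ e v1 v2.
  by move: Cs; rewrite Hs /= => /andP[-> /andP[-> _]].
have v02 : v0 != v2.
  by move: Us; rewrite Hs /= !inE !negb_or => /andP[/andP[_ /andP[]]].
have e10 : e v1 v0 by rewrite esym.
have [sg sG [sv1 sv0 sv2]] := SWAP e10 e12 v02.
have Hinv : (sg^-1 * g * sg)%g = g^-1%g.
  apply: (AR_uniq (u := v2) (v := v1)); rewrite ?groupM ?groupV //.
  - by rewrite esym.
  - by rewrite !permM -{1}sv0 permK g0 sv1 -g1 permK.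
  - by rewrite !permM -{1}sv1 permK g1 sv2 -g0 permK.
have Hc y : sg (g y) = g^-1%g (sg y).
  by rewrite -Hinv !permM permK.
exists sg => //; exists (index v2 (rev s)).
have Ur : uniq (rev s) by rewrite rev_uniq.
rewrite (rot_traject (h := g^-1%g) Ur); first last.
- by rewrite mem_rev Hs !inE eqxx !orbT.
- move=> y; rewrite mem_rev => ys; rewrite next_rev //.
  by rewrite -{1}(next_prev Us y) -Hfwd ?mem_prev // permK.
have Ut : uniq (map sg s) by rewrite map_inj_uniq //; apply: perm_inj.
have Ht : map sg s = v2 :: map sg (v1 :: v2 :: w) by rewrite Hs /= sv0.
rewrite size_rev -(size_map sg) Ht; apply: traject_of; rewrite -Ht //.
move=> y /mapP [x xs ->]; rewrite next_map //; last by apply: perm_inj.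
by rewrite -Hfwd // Hc.
Qed.

End Part1.

Lemma part1_orbit O F : is_map e F -> class2_01 e F -> map_aut e F = G ->
  cc_orbit e G O -> orbit_symmetric e G O.
Proof.
move=> HF HC HA [C0 HC0 ->] C /imsetP [h hG ->].
apply: (SYM HF HC HA); exact: ucons_map.
Qed.

Lemma D0sub (h : V -> V) t1 t2 a : uniq t1 ->
  (forall x, x \in t1 -> h x = next t1 x) -> (forall x, x \in t2 -> h x = next t2 x) ->
  a \in t1 -> a \in t2 -> forall x, x \in t1 -> x \in t2.
Proof.
move=> U1 H1 H2 a1 a2; apply: (cyc_ind U1 a1 a2) => y y1 y2.
by rewrite -H1 // H2 // mem_next.
Qed.

Lemma D0 (h : V -> V) t1 t2 a : uniq t1 -> uniq t2 ->
  (forall x, x \in t1 -> h x = next t1 x) -> (forall x, x \in t2 -> h x = next t2 x) ->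
  a \in t1 -> a \in t2 -> cycle_edges t1 = cycle_edges t2.
Proof.
move=> U1 U2 H1 H2 a1 a2.
have S12 := D0sub U1 H1 H2 a1 a2; have S21 := D0sub U2 H2 H1 a2 a1.
apply/setP => E; apply/imsetP/imsetP => [[x xs ->]|[x xs ->]].
- by exists x; rewrite ?S12 // -H1 // H2 // S12.
- by exists x; rewrite ?S21 // -H2 // H1 // S21.
Qed.

Lemma act_cyc_card (h : {perm V}) (C : {set {set V}}) : #|act_cyc h C| = #|C|.
Proof.
apply: card_imset; apply: (@can_inj _ _ (fun E : {set V} => h @: E) (fun E => h^-1%g @: E)) => E.
rewrite -imset_comp -[RHS]imset_id; apply: eq_imset => x /=; by rewrite permK.
Qed.

Lemma stab_sub (h : {perm V}) (C : {set {set V}}) :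
  (forall E, E \in C -> h @: E \in C) -> act_cyc h C = C.
Proof.
move=> H; apply/eqP; rewrite eqEcard act_cyc_card leqnn andbT.
by apply/subsetP => X /imsetP [E EC ->]; apply: H.
Qed.

Lemma edge_e s x y : dcycle e s -> [set x; y] \in cycle_edges s -> e x y.
Proof.
case=> Us _ Cs /(edgeP _ _ Us) [xs [->|->]]; first exact: next_cycle.
by rewrite esym; apply: prev_cycle.
Qed.

Lemma dcycle_rev s : dcycle e s -> dcycle e (rev s).
Proof.
case=> Us Ss Cs; split; rewrite ?rev_uniq ?size_rev //.
by rewrite rev_cycle (eq_cycle (e' := e)) // => x y /=; rewrite esym.
Qed.

Lemma L_good C : uconsistent e G C -> exists s, [/\ dcycle e s, cycle_edges s = C,
  exists2 g, g \in G & (forall x, x \in s -> g x = next s x) &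
  exists2 g, g \in G & (forall x, x \in s -> g x = prev s x)].
Proof.
case=> s [Ds Es [g gG Hg] [g' g'G Hg']]; have Us : uniq s by case: Ds.
exists s; split => //; first by exists g => //; apply: fwd_of_rot.
exists g' => // x xs; rewrite -next_rev //; apply: fwd_of_rot; rewrite ?rev_uniq //.
by rewrite mem_rev.
Qed.

Lemma OA C v a b : uconsistent e G C -> [set v; a] \in C -> [set v; b] \in C -> a != b ->
  exists t, [/\ dcycle e t, cycle_edges t = C &
    exists2 h, h \in G & [/\ forall x, x \in t -> h x = next t x, h a = v & h v = b]].
Proof.
move=> /L_good [s [Ds Es [g gG Hg] [g' g'G Hg']]] va vb ab.
have Us : uniq s by case: Ds.
rewrite -Es in va vb.
case/(edgeP _ _ Us): va => vs Ha; case/(edgeP _ _ Us): vb => _ Hb.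
case: Ha => Ha; case: Hb => Hb; rewrite Ha Hb ?eqxx in ab => //.
- exists (rev s); split; first exact: dcycle_rev.
    by rewrite cycle_edges_rev.
  exists g' => //; split.
  + by move=> x; rewrite mem_rev => xs; rewrite next_rev // Hg'.
  + by rewrite Ha Hg' ?mem_next // prev_next.
  + by rewrite Hb Hg'.
- exists s; split => //; exists g => //; split => //.
  + by rewrite Ha Hg ?mem_prev // next_prev.
  + by rewrite Hb Hg.
Qed.

Lemma D C1 C2 v a b : uconsistent e G C1 -> uconsistent e G C2 ->
  [set v; a] \in C1 -> [set v; b] \in C1 -> [set v; a] \in C2 -> [set v; b] \in C2 ->
  a != b -> C1 = C2.
Proof.
move=> H1 H2 a1 b1 a2 b2 ab.
have [t1 [D1 E1 [h1 h1G [F1 h1a h1v]]]] := OA H1 a1 b1 ab.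
have [t2 [D2 E2 [h2 h2G [F2 h2a h2v]]]] := OA H2 a2 b2 ab.
have U1 : uniq t1 by case: D1.
have U2 : uniq t2 by case: D2.
have eav : e a v by apply: (edge_e D1); rewrite set2C E1.
have at1 : a \in t1 by apply: (edge_mem (y := v) U1); rewrite set2C E1.
have at2 : a \in t2 by apply: (edge_mem (y := v) U2); rewrite set2C E2.
have h12 : h1 = h2 by apply: (AR_uniq h1G h2G eav); rewrite ?h1a ?h2a ?h1v ?h2v.
rewrite -E1 -E2; apply: (D0 U1 U2 F1 _ at1 at2); by rewrite h12.
Qed.

Lemma SIG C s : dcycle e s -> cycle_edges s = C -> usymmetric e G C ->
  exists2 sg, sg \in G & forall x, x \in s -> sg x \in s /\ sg (next s x) = prev s (sg x).
Proof.
case=> Us Ss Cs Es [_ [s' [[Us' Ss' Cs'] Es' [sg sG [k Hk]]]]].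
have Ur : uniq (rev s') by rewrite rev_uniq.
have H1 x : x \in s' -> sg x \in s' /\ sg (next s' x) = prev s' (sg x).
  move=> xs; split.
    by rewrite -(mem_rev s') -(mem_rot k) -Hk mem_map //; apply: perm_inj.
  rewrite -next_map; last by []; last by apply: perm_inj.
  by rewrite Hk next_rot // next_rev.
have Ess : cycle_edges s = cycle_edges s' by rewrite Es Es'.
have inS x : x \in s -> x \in s'.
  by move=> xs; apply: (edge_mem (y := next s x) Us'); rewrite -Ess mem_edges.
have inS' x : x \in s' -> x \in s.
  by move=> xs; apply: (edge_mem (y := next s' x) Us); rewrite Ess mem_edges.
exists sg => // x xs; have [H1a H1b] := H1 x (inS x xs).
split; first exact: inS'.
case: (orient Us Us' Ss' Ess) => Ho.
- have Hp y : y \in s -> prev s' y = prev s y.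
    move=> ys; rewrite -{1}(next_prev Us y) -Ho ?mem_prev // prev_next //.
  by rewrite -Ho // H1b Hp // inS'.
- have Hp y : y \in s -> prev s' y = next s y.
    move=> ys; rewrite -{1}(prev_next Us y) -Ho ?mem_next // prev_next //.
  set x' := next s x.
  have x's : x' \in s by rewrite mem_next.
  have : sg x = next s (sg x').
    have [Ha Hb] := H1 x' (inS x' x's).
    have E1 : next s' x' = x by rewrite Ho // /x' prev_next.
    by rewrite -{1}E1 Hb Hp // inS'.
  by move=> ->; rewrite prev_next.
Qed.

Section Stab.
Variables (C : {set {set V}}) (s : seq V) (g sg : {perm V}).
Hypotheses (Ds : dcycle e s) (Es : cycle_edges s = C) (gG : g \in G) (sG : sg \in G)
  (Hg : forall x, x \in s -> g x = next s x)
  (Hs : forall x, x \in s -> sg x \in s /\ sg (next s x) = prev s (sg x)).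

Let Us : uniq s. Proof. by case: Ds. Qed.

Definition stab m := m \in G /\ act_cyc m C = C.

Lemma stab_mul a b : stab a -> stab b -> stab (a * b)%g.
Proof. by case=> aG aC [bG bC]; split; rewrite ?groupM // act_cyc_mul aC bC. Qed.

Lemma stab_g : stab g.
Proof.
split => //; apply: stab_sub => E; rewrite -Es => /imsetP [x xs ->].
by rewrite imset_pair !Hg ?mem_next // mem_edges // mem_next.
Qed.

Lemma stab_sg : stab sg.
Proof.
split => //; apply: stab_sub => E; rewrite -Es => /imsetP [x xs ->].
have [H1 H2] := Hs xs.
by rewrite imset_pair H2; apply/edgeP => //; auto.
Qed.

Lemma stab_gX j : stab (g ^+ j)%g.
Proof.
elim: j => [|j IH]; first by split; rewrite ?expg0 ?group1 ?act_cyc1.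
by rewrite expgSr; apply: stab_mul IH stab_g.
Qed.

Lemma iter_in j x : x \in s -> iter j g x \in s.
Proof. by move=> xs; elim: j => //= j IH; rewrite Hg // mem_next. Qed.

Lemma iter_next j x : x \in s -> iter j g (next s x) = next s (iter j g x).
Proof.
move=> xs; elim: j => //= j IH.
by rewrite IH Hg ?mem_next ?iter_in // Hg ?iter_in.
Qed.

Lemma iter_reach x y : x \in s -> y \in s -> exists j, iter j g x = y.
Proof.
move=> xs; apply: (cyc_ind (P := fun y => exists j, iter j g x = y) Us xs).
  by exists 0.
by move=> z zs [j Hj]; exists j.+1; rewrite /= Hj Hg.
Qed.

Lemma ST_fwd x y : x \in s -> y \in s ->
  exists m, [/\ stab m, m x = y & m (next s x) = next s y].
Proof.
move=> xs ys; have [j Hj] := iter_reach xs ys.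
by exists (g ^+ j)%g; split; rewrite ?permX ?iter_next -?Hj //; apply: stab_gX.
Qed.

Lemma ST_rev x y : x \in s -> y \in s ->
  exists m, [/\ stab m, m x = next s y & m (next s x) = y].
Proof.
move=> xs ys; have [H1 H2] := Hs xs.
have ps : prev s (sg x) \in s by rewrite mem_prev.
have [m [Sm m1 m2]] := ST_fwd ps ys.
exists (sg * m)%g; split; first exact: stab_mul stab_sg Sm.
- by rewrite permM -m2 next_prev.
- by rewrite permM H2.
Qed.

Lemma ST a b c d : [set a; b] \in C -> [set c; d] \in C ->
  exists m, [/\ stab m, m a = c & m b = d].
Proof.
rewrite -Es => /(edgeP _ _ Us) [a_s Hb] /(edgeP _ _ Us) [c_s Hd].
case: Hb => ->; case: Hd => ->.
- exact: ST_fwd.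
- have ps : prev s c \in s by rewrite mem_prev.
  have [m [Sm m1 m2]] := ST_rev a_s ps.
  by exists m; split; rewrite // m1 next_prev.
- have ps : prev s a \in s by rewrite mem_prev.
  have [m [Sm m1 m2]] := ST_rev ps c_s.
  by exists m; split; rewrite // -m2 next_prev.
- have pa : prev s a \in s by rewrite mem_prev.
  have pc : prev s c \in s by rewrite mem_prev.
  have [m [Sm m1 m2]] := ST_fwd pa pc.
  by exists m; split; rewrite // -{1}(next_prev Us a) m2 next_prev.
Qed.

End Stab.

Lemma orbit_closed C0 C h : C \in cyc_orbit G C0 -> h \in G ->
  act_cyc h C \in cyc_orbit G C0.
Proof.
case/imsetP => h1 h1G -> hG; rewrite -act_cyc_mul; apply: imset_f.
by rewrite groupM.
Qed.

Lemma orbit_self C0 : C0 \in cyc_orbit G C0.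
Proof. by apply/imsetP; exists 1%g; rewrite ?group1 ?act_cyc1. Qed.

Lemma orbit_eq C0 C : C \in cyc_orbit G C0 -> cyc_orbit G C = cyc_orbit G C0.
Proof.
move=> HC; apply/setP => X; apply/imsetP/imsetP => [[g gG ->]|[g gG ->]].
- by apply/imsetP; apply: orbit_closed.
- case/imsetP: HC => h hG ->; exists (h^-1 * g)%g; first by rewrite groupM ?groupV.
  by rewrite act_cyc_mul act_cycK.
Qed.

Lemma cc_mem O C : cc_orbit e G O -> C \in O -> uconsistent e G C.
Proof. by case=> C0 H0 -> /imsetP [h hG ->]; apply: ucons_map. Qed.

Lemma orbit_exists O u w : cc_orbit e G O -> e u w -> exists2 C, C \in O & [set u; w] \in C.
Proof.
case=> C0 [s [[Us Ss Cs] Es _ _]] -> euw.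
have [x0 xs] : exists x0, x0 \in s by case: s Ss {Us Cs Es} => [|x0 s] //; exists x0; rewrite mem_head.
have ex : e x0 (next s x0) by apply: next_cycle.
have [h hG [h1 h2]] := AR_ex ex euw.
exists (act_cyc h C0); first by apply: imset_f.
by rewrite -h1 -h2; apply: act_edge; rewrite -Es mem_edges.
Qed.

Lemma partner C v a : uconsistent e G C -> [set v; a] \in C ->
  exists b, [/\ b != a, [set v; b] \in C & e v b].
Proof.
case/L_good => s [Ds Es _ _]; have [Us Ss Cs] := Ds.
rewrite -Es => va; have [vs Ha] := (edgeP _ _ Us).1 va.
have np := next_prev_neq Us Ss vs.
have Hn : [set v; next s v] \in cycle_edges s by apply: mem_edges.
have Hp : [set v; prev s v] \in cycle_edges s by apply/edgeP => //; auto.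
case: Ha => ->.
- by exists (prev s v); split; rewrite // 1?eq_sym // (edge_e Ds).
- by exists (next s v); split; rewrite // (edge_e Ds).
Qed.

Lemma partner_uniq C v a b b' : uconsistent e G C -> [set v; a] \in C ->
  [set v; b] \in C -> [set v; b'] \in C -> b != a -> b' != a -> b = b'.
Proof.
case/L_good => s [Ds Es _ _]; have [Us Ss Cs] := Ds.
rewrite -Es => /(edgeP _ _ Us) [vs Ha] /(edgeP _ _ Us) [_ Hb] /(edgeP _ _ Us) [_ Hb'].
by case: Ha => ->; case: Hb => ->; case: Hb' => ->; rewrite ?eqxx.
Qed.

Section Part2.
Hypothesis Hsym : forall O, cc_orbit e G O -> orbit_symmetric e G O.

Lemma U O C C' u w : cc_orbit e G O -> C \in O -> C' \in O ->
  [set u; w] \in C -> [set u; w] \in C' -> e u w -> C = C'.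
Proof.
move=> HO CO C'O uC uC' euw.
have HsC := Hsym HO CO.
have [s [Ds Es [g gG Hg] _]] := L_good HsC.1.
have [sg sgG Hs] := SIG Ds Es HsC.
have [k kG Ek] : exists2 k, k \in G & C' = act_cyc k C.
  case: HO CO C'O => C0 _ -> /imsetP [h1 h1G ->] /imsetP [h2 h2G ->].
  exists (h1^-1 * h2)%g; first by rewrite groupM ?groupV.
  by rewrite act_cyc_mul act_cycK.
have kuw : [set k^-1%g u; k^-1%g w] \in C.
  by apply: (act_edge_inv (g := k)); rewrite !permKV -Ek.
have [m [[mG mC] m1 m2]] := ST Ds Es gG sgG Hg Hs kuw uC.
have ek : e (k^-1%g u) (k^-1%g w) by rewrite (aut_e (g := k^-1%g)) ?groupV.
have mk : m = k by apply: (AR_uniq mG kG ek); rewrite ?m1 ?m2 !permKV.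
by rewrite Ek -mk mC.
Qed.

Lemma flag_edge (v : V) (E : {set V}) : v \in E -> is_edge e E -> exists w, E = [set v; w] /\ e v w.
Proof.
move=> vE [a [b [eab Eab]]]; move: vE; rewrite Eab => /set2P [->|->].
- by exists b.
- by exists a; rewrite set2C esym.
Qed.

Hypothesis HG : G = graph_aut e :> {set {perm V}}.
Variables O1 O2 : {set {set {set V}}}.
Hypotheses (H1 : cc_orbit e G O1) (H2 : cc_orbit e G O2) (H12 : O1 != O2).

Let F := O1 :|: O2.

Lemma disj X : X \in O1 -> X \in O2 -> False.
Proof.
move: H1 H2 H12 => [C1 _ ->] [C2 _ ->] N X1 X2.
by move: N; rewrite -(orbit_eq X1) -(orbit_eq X2) eqxx.
Qed.

Lemma F_orb f : f \in F -> exists O, [/\ cc_orbit e G O, f \in O & O \subset F].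
Proof.
rewrite inE => /orP [fO|fO]; [exists O1 | exists O2]; split => //;
  apply/subsetP => X XO; by rewrite inE XO ?orbT.
Qed.

Lemma MA : map_aut e F = G.
Proof.
apply/setP => g; rewrite inE -HG.
apply/andP/idP => [[]//|gG]; split => //.
apply/eqP/setP => X; apply/imsetP/idP => [[f fF ->]|XF].
- have [O [HO fO sOF]] := F_orb fF.
  move: HO fO => [C0 _ EO] fO; apply: (subsetP sOF); rewrite EO in fO *.
  exact: orbit_closed.
- exists (act_cyc g^-1%g X); last by rewrite act_cycKV.
  have [O [HO fO sOF]] := F_orb XF.
  move: HO fO => [C0 _ EO] fO; apply: (subsetP sOF); rewrite EO in fO *.
  by apply: orbit_closed; rewrite ?groupV.
Qed.

Lemma orbit_closed' O f g : cc_orbit e G O -> f \in O -> g \in G -> act_cyc g f \in O.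
Proof. by case=> C0 _ -> fO gG; apply: orbit_closed. Qed.

Lemma IM : is_map e F.
Proof.
split.
- move=> f /F_orb [O [HO fO _]]; have [s [Ds Es _ _]] := cc_mem HO fO.
  by exists s.
- move=> u w euw.
  have [f1 f1O e1] := orbit_exists H1 euw.
  have [f2 f2O e2] := orbit_exists H2 euw.
  have -> : [set f in F | [set u; w] \in f] = [set f1; f2].
    apply/setP => X; rewrite !inE; apply/andP/orP => [[/orP [XO|XO] Xe]|[/eqP->|/eqP->]].
    + by left; apply/eqP; apply: (U H1 XO f1O Xe e1 euw).
    + by right; apply/eqP; apply: (U H2 XO f2O Xe e2 euw).
    + by rewrite f1O.
    + by rewrite f2O orbT.
  rewrite cards2; case: eqP => // E; exfalso; apply: (disj (X := f2)) => //.
  by rewrite -E.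
- move=> v x y ex ey.
  set R := (fun a b => _).
  have HR a b f : f \in F -> e v a -> e v b -> [set v; a] \in f -> [set v; b] \in f -> R a b.
    move=> fF ea eb fa fb; rewrite /R ea eb /=; apply/existsP; exists f.
    by rewrite fF fa fb.
  have F1 f : f \in O1 -> f \in F by move=> fO; rewrite inE fO.
  have F2 f : f \in O2 -> f \in F by move=> fO; rewrite inE fO orbT.
  have [xy|xy] := eqVneq x y; first by rewrite xy connect0.
  have [f1 f1O e1] := orbit_exists H1 ex.
  have [p [px pf1 ep]] := partner (cc_mem H1 f1O) e1.
  have [f2 f2O e2] := orbit_exists H2 ep.
  have [q [qp qf2 eqq]] := partner (cc_mem H2 f2O) e2.
  have qx : q != x.
    apply/eqP => qx; rewrite qx in qf2.
    have xp : x != p by rewrite eq_sym.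
    have E := D (cc_mem H1 f1O) (cc_mem H2 f2O) e1 pf1 qf2 e2 xp.
    by apply: (disj (X := f1)); rewrite // E.
  have Rxp : R x p by apply: (HR _ _ f1) => //; apply: F1.
  have Rpq : R p q by apply: (HR _ _ f2) => //; apply: F2.
  have [yp|yp] := eqVneq y p; first by rewrite yp connect1.
  have [yq|yq] := eqVneq y q.
    by rewrite yq; apply: connect_trans (connect1 Rxp) (connect1 Rpq).
  have [f3 f3O e3] := orbit_exists H1 ey.
  have [r [ry rf3 er]] := partner (cc_mem H1 f3O) e3.
  have rx : r != x.
    apply/eqP => rx; rewrite rx in rf3.
    have E : f3 = f1 := U H1 f3O f1O rf3 e1 ex.
    rewrite E in e3.
    have yx : y != x by rewrite eq_sym.
    have := partner_uniq (cc_mem H1 f1O) e1 pf1 e3 px yx.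
    by move=> py; rewrite py eqxx in yp.
  have rp : r != p.
    apply/eqP => rp; rewrite rp in rf3.
    have E : f3 = f1 := U H1 f3O f1O rf3 pf1 ep.
    rewrite E in e3.
    have xp : x != p by rewrite eq_sym.
    have := partner_uniq (cc_mem H1 f1O) pf1 e1 e3 xp yp.
    by move=> xy'; rewrite xy' eqxx in xy.
  have rq : r = q.
    apply: (five ex ep ey eqq er); by rewrite // eq_sym.
  have Rqy : R q y by apply: (HR _ _ f3) => //; [apply: F1 | rewrite -rq].
  apply: connect_trans (connect1 Rxp) _; apply: connect_trans (connect1 Rpq) (connect1 Rqy).
Qed.

Lemma inF_O f : f \in F -> exists O, cc_orbit e G O /\ f \in O.
Proof. by case/F_orb => O [HO fO _]; exists O. Qed.

Lemma C2 : class2_01 e F.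
Proof.
have FO1 f : f \in O1 -> f \in F by move=> fO; rewrite inE fO.
have FO2 f : f \in O2 -> f \in F by move=> fO; rewrite inE fO orbT.
split.
- have [C1 HC1 EO1] := H1.
  have [s [[Us Ss Cs] Es _ _]] := HC1.
  have [x0 xs] : exists x0, x0 \in s.
    by case: s Ss {Us Cs Es} => [|x0 s] //; exists x0; rewrite mem_head.
  set w0 := next s x0.
  have ex : e x0 w0 by apply: next_cycle.
  have f1O : C1 \in O1 by rewrite EO1 orbit_self.
  have e1 : [set x0; w0] \in C1 by rewrite -Es mem_edges.
  have [f2 f2O e2] := orbit_exists H2 ex.
  have Fl f : f \in F -> [set x0; w0] \in f -> is_flag e F (x0, [set x0; w0], f).
    by move=> fF ef; split => //; [rewrite set21 | exists x0, w0].
  exists (x0, [set x0; w0], C1), (x0, [set x0; w0], f2); split.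
  + by apply: Fl; rewrite ?FO1.
  + by apply: Fl; rewrite ?FO2.
  + case=> g; rewrite MA => gG [_ _ E].
    apply: (disj (X := f2)) => //; rewrite -E; exact: orbit_closed' H1 f1O gG.
  + case=> [[v E] f] [vE EE Ef fF].
    have [w [Ew evw]] := flag_edge vE EE.
    have [g gG [g1 g2]] := AR_ex ex evw.
    have Hg : act_cyc g C1 \in O1 by exact: orbit_closed' H1 f1O gG.
    have Hg2 : act_cyc g f2 \in O2 by exact: orbit_closed' H2 f2O gG.
    have eg1 : [set v; w] \in act_cyc g C1 by rewrite -g1 -g2; apply: act_edge.
    have eg2 : [set v; w] \in act_cyc g f2 by rewrite -g1 -g2; apply: act_edge.
    rewrite Ew in Ef.
    move: fF; rewrite inE => /orP [fO|fO]; [left|right]; exists g; rewrite ?MA //=.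
    * by rewrite g1 imset_pair g1 g2 Ew (U H1 Hg fO eg1 Ef evw).
    * by rewrite g1 imset_pair g1 g2 Ew (U H2 Hg2 fO eg2 Ef evw).
- case=> [[v E] f] [vE EE Ef fF].
  have [w [Ew evw]] := flag_edge vE EE.
  have [O [HO fO]] := inF_O fF.
  rewrite Ew in Ef.
  split.
  + case=> [[v' E'] f'] [[v'E' _ _ _] /= [v'v E'E f'f]].
    rewrite E'E Ew in v'E'; case/set2P: v'E' => v'w; first by rewrite v'w eqxx in v'v.
    have ewv : e w v by rewrite esym.
    have [g gG [g1 g2]] := AR_ex evw ewv.
    exists g; rewrite ?MA //=.
    have Hg : act_cyc g f \in O by exact: orbit_closed' HO fO gG.
    have eg : [set v; w] \in act_cyc g f.
      by have := act_edge g Ef; rewrite g1 g2 set2C.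
    by rewrite g1 E'E f'f v'w Ew imset_pair g1 g2 set2C (U HO Hg fO eg Ef evw).
  + case=> [[v' E'] f'] [[v'E' EE' E'f _] /= [v'v E'E f'f]].
    rewrite v'v in v'E'.
    have [w' [Ew' evw']] := flag_edge v'E' EE'.
    have [g gG [g1 g2]] := AR_ex evw evw'.
    exists g; rewrite ?MA //=.
    have Hg : act_cyc g f \in O by exact: orbit_closed' HO fO gG.
    have eg : [set v; w'] \in act_cyc g f by rewrite -{1}g1 -g2; apply: act_edge.
    rewrite f'f Ew' in E'f.
    by rewrite g1 v'v Ew imset_pair g1 g2 Ew' f'f (U HO Hg fO eg E'f evw').
  + case=> [[v' E'] f'] [_ /= [v'v E'E f'f]] [g]; rewrite MA => gG /= [gv gE gf].
    have gw : g w = w.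
      move: gE; rewrite E'E Ew imset_pair gv v'v => /set2_eq [[_ ->]|[E1 E2]] //.
      by move: evw; rewrite E1 eirr.
    have g1 : g = 1%g.
      by apply: (AR_uniq gG (group1 _) evw); rewrite perm1 // gv v'v.
    by move: f'f; rewrite -gf g1 act_cyc1 eqxx.
Qed.

End Part2.

Lemma part2 (Hsym : forall O, cc_orbit e G O -> orbit_symmetric e G O)
  (HG : G = graph_aut e :> {set {perm V}}) O1 O2 :
  cc_orbit e G O1 -> cc_orbit e G O2 -> O1 != O2 ->
  exists F : {set {set {set V}}},
     [/\ is_map e F, class2_01 e F, map_aut e F = G & F = O1 :|: O2].
Proof.
move=> H1 H2 H12; exists (O1 :|: O2); split => //.
- exact: IM.
- exact: C2.
- exact: MA.
Qed.

End Graph.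

Unset Implicit Arguments.

Theorem theorem2p7 (V : finType) (e : rel V) (G : {group {perm V}}) :
  simple_graph e -> graph_connected e -> tetravalent e ->
  G \subset graph_aut e -> arc_regular e G ->
  (forall F : {set {set {set V}}},
     is_map e F -> class2_01 e F -> map_aut e F = G ->
     forall O, cc_orbit e G O -> orbit_symmetric e G O) /\
  (G = graph_aut e :> {set {perm V}} ->
   (forall O, cc_orbit e G O -> orbit_symmetric e G O) ->
   forall O1 O2, cc_orbit e G O1 -> cc_orbit e G O2 -> O1 != O2 ->
   exists F : {set {set {set V}}},
     [/\ is_map e F, class2_01 e F, map_aut e F = G & F = O1 :|: O2]).
Proof.
move=> [esym eirr] _ tetra GA AR; split.
- by move=> F HF HC HA O HO; apply: (part1_orbit esym eirr tetra GA AR HF HC HA).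
- by move=> HG Hsym; apply: (part2 esym eirr tetra GA AR Hsym HG).
Qed.
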